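(* There exists $T_0>0$ depending only on $\lambda$ and $\alpha$ such that for any solution $s(t)$ of $\dot s_1=s_1\psi(s_1^2+s_2^2)\log\lambda$, $\dot s_2=-s_2\psi(s_1^2+s_2^2)\log\lambda$ with $s(0)\in D_{r_0}$, every time interval during which $s(t)$ stays in $D_{r_0}\setminus D_{r_0/2}$ has length less than $T_0$.
   Context: Here $\lambda>1$ is the largest eigenvalue of $A=\begin{pmatrix}2&1\\1&1\end{pmatrix}$, $0<\alpha<1$, $0<r_0<1$, $D_r=\{(s_1,s_2):s_1^2+s_2^2\le r\}$, and $\psi:[0,1]\to[0,1]$ is $C^\infty$ except at $0$, with $\psi(u)=1$ for $u\ge r_0$, $\psi'>0$ and decreasing on $(0,r_0)$, and $\psi(u)=(u/r_0)^\alpha$ for $0\le u\le r_0/2$. *)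

(* Defs.v *)
From Stdlib Require Import Reals Lra.
From Coquelicot Require Import Coquelicot.
Open Scope R_scope.

(* lam = largest eigenvalue of A = [[2,1],[1,1]]; its characteristic
   polynomial is x^2 - 3x + 1, whose largest root is (3 + sqrt 5)/2. *)
Definition lam : R := (3 + sqrt 5) / 2.

Definition inD (r s1 s2 : R) : Prop := s1 ^ 2 + s2 ^ 2 <= r.

(* The hypotheses on psi (psi given as a total function R -> R; only its
   values on [0,1] matter). *)
Definition psi_ok (alpha r0 : R) (psi : R -> R) : Prop :=
  (forall u, 0 <= u <= 1 -> 0 <= psi u <= 1) /\
  (* C^infty on (0,1) (psi is locally constant = 1 near 1, as r0 < 1) *)
  (forall (n : nat) u, 0 < u < 1 -> ex_derive_n psi n u) /\
  (forall u, r0 <= u <= 1 -> psi u = 1) /\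
  (forall u, 0 < u < r0 -> Derive psi u > 0) /\
  (forall u v, 0 < u -> u < v -> v < r0 -> Derive psi v <= Derive psi u) /\
  psi 0 = 0 /\
  (forall u, 0 < u <= r0 / 2 -> psi u = Rpower (u / r0) alpha).

(* Main.v *)
Require Import Defs.
From Stdlib Require Import Reals Lra.
From Coquelicot Require Import Coquelicot.
Open Scope R_scope.

Lemma lnlam_pos : 0 < ln lam.
Proof.
  rewrite <- ln_1. apply ln_increasing. lra.
  unfold lam. pose proof (sqrt_pos 5). lra.
Qed.

Lemma half_pow alpha : 0 < alpha < 1 -> Rpower (1/2) alpha >= 1/2.
Proof.
  intros Ha. unfold Rpower.
  assert (Hl : ln (1/2) < 0) by (rewrite <- ln_1; apply ln_increasing; lra).
  assert (ln (1/2) <= alpha * ln (1/2)) by nra.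
  assert (HE : exp (ln (1/2)) <= exp (alpha * ln (1/2))).
  { destruct (Req_dec (ln (1/2)) (alpha * ln (1/2))) as [E|E].
    rewrite <- E; lra. left. apply exp_increasing. lra. }
  rewrite exp_ln in HE by lra. lra.
Qed.

Lemma psi_low alpha r0 psi : 0 < alpha < 1 -> 0 < r0 < 1 -> psi_ok alpha r0 psi ->
  forall u, r0/2 < u <= r0 -> psi u >= 1/2.
Proof.
  intros Ha Hr [H1 [H2 [H3 [H4 [H5 [H6 H7]]]]]] u Hu.
  destruct (Req_dec u r0) as [E|E].
  { subst. rewrite H3 by lra. lra. }
  assert (Hh : psi (r0/2) >= 1/2).
  { rewrite H7 by lra. replace (r0/2/r0) with (1/2) by (field; lra).
    apply half_pow; auto. }
  assert (Hd : forall x, 0 < x < 1 -> ex_derive psi x).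
  { intros x Hx. exact (H2 1%nat x Hx). }
  destruct (MVT_gen psi (r0/2) u (Derive psi)) as [c [Hc Heq]].
  - intros x Hx. rewrite Rmin_left in Hx by lra. rewrite Rmax_right in Hx by lra.
    apply Derive_correct. apply Hd. lra.
  - intros x Hx. rewrite Rmin_left in Hx by lra. rewrite Rmax_right in Hx by lra.
    apply continuity_pt_filterlim. apply (ex_derive_continuous (K:=R_AbsRing) (V:=R_NormedModule)). apply Hd. lra.
  - rewrite Rmin_left in Hc by lra. rewrite Rmax_right in Hc by lra.
    assert (Derive psi c > 0) by (apply H4; lra).
    assert (Derive psi c * (u - r0/2) >= 0) by nra.
    lra.
Qed.

Theorem lemma5p6 :
  forall alpha : R, 0 < alpha < 1 ->
  exists T0 : R, 0 < T0 /\
  forall (r0 : R) (psi : R -> R), 0 < r0 < 1 -> psi_ok alpha r0 psi ->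
  forall (lo hi : Rbar) (s1 s2 : R -> R),
    Rbar_lt lo 0 -> Rbar_lt 0 hi ->
    (forall t : R, Rbar_lt lo t -> Rbar_lt t hi ->
       is_derive s1 t (s1 t * psi (s1 t ^ 2 + s2 t ^ 2) * ln lam) /\
       is_derive s2 t (- s2 t * psi (s1 t ^ 2 + s2 t ^ 2) * ln lam)) ->
    inD r0 (s1 0) (s2 0) ->
    forall a b : R, a < b ->
    (forall t, a < t < b ->
       Rbar_lt lo t /\ Rbar_lt t hi /\
       inD r0 (s1 t) (s2 t) /\ ~ inD (r0 / 2) (s1 t) (s2 t)) ->
    b - a < T0.
Proof.
  intros alpha Ha. pose proof lnlam_pos as HL.
  exists (9 / ln lam). split. apply Rdiv_lt_0_compat; lra.
  intros r0 psi Hr Hpsi lo hi s1 s2 _ _ Hder _ a b Hab Hin.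
  set (a' := a + (b-a)/4). set (b' := b - (b-a)/4).
  set (f := fun t => s1 t ^ 2 - s2 t ^ 2).
  set (df := fun t => 2 * s1 t * (s1 t * psi (s1 t ^ 2 + s2 t ^ 2) * ln lam)
                    - 2 * s2 t * (- s2 t * psi (s1 t ^ 2 + s2 t ^ 2) * ln lam)).
  assert (Hfd : forall t, a < t < b -> is_derive f t (df t)).
  { intros t Ht. destruct (Hin t Ht) as [Hl [Hh _]].
    destruct (Hder t Hl Hh) as [D1 D2].
    pose proof (is_derive_mult s1 s1 t _ _ D1 D1 Rmult_comm) as M1.
    pose proof (is_derive_mult s2 s2 t _ _ D2 D2 Rmult_comm) as M2.
    pose proof (is_derive_minus _ _ t _ _ M1 M2) as M.
    unfold minus in M.
    match type of M with is_derive ?g _ ?v => replace (df t) with v by (unfold df, mult, plus, opp; simpl; ring);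
      apply (is_derive_ext g) end.
    { intros u. unfold f, mult, plus, opp; simpl. ring. }
    exact M. }
  destruct (MVT_gen f a' b' df) as [c [Hc Heq]].
  - intros x Hx. rewrite Rmin_left in Hx by (unfold a', b'; lra).
    rewrite Rmax_right in Hx by (unfold a', b'; lra).
    apply Hfd. unfold a', b' in Hx; lra.
  - intros x Hx. rewrite Rmin_left in Hx by (unfold a', b'; lra).
    rewrite Rmax_right in Hx by (unfold a', b'; lra).
    apply continuity_pt_filterlim. apply (ex_derive_continuous (K:=R_AbsRing) (V:=R_NormedModule)).
    eexists. apply Hfd. unfold a', b' in Hx; lra.
  - rewrite Rmin_left in Hc by (unfold a', b'; lra).
    rewrite Rmax_right in Hc by (unfold a', b'; lra).
    assert (Hc' : a < c < b) by (unfold a', b' in Hc; lra).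
    destruct (Hin c Hc') as [_ [_ [Hc1 Hc2]]].
    assert (Ha1 : a < a' < b) by (unfold a', b'; lra).
    assert (Hb1 : a < b' < b) by (unfold a', b'; lra).
    destruct (Hin a' Ha1) as [_ [_ [Ha2 _]]].
    destruct (Hin b' Hb1) as [_ [_ [Hb2 _]]].
    unfold inD in *.
    set (u := s1 c ^ 2 + s2 c ^ 2) in *.
    assert (Hp : psi u >= 1/2) by (apply (psi_low alpha r0 psi); auto; lra).
    assert (Hdf : df c = 2 * psi u * ln lam * u) by (unfold df, u; ring).
    rewrite Hdf in Heq. unfold f in Heq.
    assert (Hup : f b' - f a' <= 2 * r0).
    { unfold f. assert (0 <= s2 b' ^ 2) by (apply pow2_ge_0).
      assert (0 <= s1 a' ^ 2) by (apply pow2_ge_0). lra. }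
    unfold f in Hup. rewrite Heq in Hup.
    assert (Hb' : b' - a' = (b - a)/2) by (unfold a', b'; field).
    rewrite Hb' in Hup.
    assert (2 * psi u * ln lam * u >= ln lam * (r0/2)).
    { assert (psi u * u >= 1/2 * (r0/2)) by nra. nra. }
    assert (ln lam * (r0/2) * ((b-a)/2) <= 2 * r0) by nra.
    assert (ln lam * (b - a) <= 8) by nra.
    apply (Rmult_lt_reg_l (ln lam)); auto.
    unfold Rdiv. replace (ln lam * (9 * / ln lam)) with 9 by (field; lra). lra.
Qed.
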